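(* Let $c,n_0\in\mathbb{Z}$ and let $p$ be a prime such that (1) $(2c-1)\,n_0\equiv 3c^2-1 \pmod{p}$, and (2) $(c^2-c)\,n_0\equiv c^3-c-1 \pmod{p^2}$. Then for every integer $k$, $(c,p,p^2k+n_0)\in\mathcal{CS}$, and the CS matrix $X_{c,p,p^2k+n_0}$ is not similar to $A_n=X_{1,1,n+2}$ for any integers $k,n$. If moreover $n_0\equiv n'\pmod p$ for some integer $n'$ such that every $(c',d',n')\in\mathcal{CS}$ of trace $n'$ is Gompf equivalent to $(1,1,2)$, then for every integer $k$ and every $\varepsilon\in\{0,1\}$ the Cappell–Shaneson homotopy sphere $\Sigma^\varepsilon_{X_{c,p,p^2k+n_0}}$ is diffeomorphic to the standard $S^4$.
   Context: $f_n(x)=x^3-nx^2+(n-1)x-1$. A CS matrix is $A\in SL(3;\mathbb{Z})$ with $\det(A-I)=1$. $\mathcal{CS}=\{(c,d,n)\in\mathbb{Z}^3: d\ne0,\ f_n(c)\equiv0\pmod d\}$, and for $(c,d,n)\in\mathcal{CS}$, $X_{c,d,n}=\begin{bmatrix}0&a&b\\0&c&d\\1&0&n-c\end{bmatrix}$ with $b=(c-1)(n-c-1)$, $a=-f_n(c)/d$; it is a CS matrix of trace $n$. Similarity means conjugacy by an element of $SL(3;\mathbb{Z})$. Gompf equivalence on $\mathcal{CS}$ is the equivalence relation generated by $(c,d,n)\sim(c',d',n')$ when $X_{c,d,n}$, $X_{c',d',n'}$ are similar, and $(c,d,n)\sim(c,d,n+kd)$ for $k\in\mathbb{Z}$. CS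 spheres: for $A\in SL(3;\mathbb{Z})$, let $f_A:T^3\to T^3$ ($T^3=\mathbb{R}^3/\mathbb{Z}^3$) be the induced diffeomorphism, isotoped to be the identity near a point $y$; let $W_A=T^3\times\mathbb{R}/(x,t)\sim(f_A(x),t-1)$ be its mapping torus, and let $\Sigma^\varepsilon_A$ be obtained from $W_A$ by surgery on the circle $\{y\}\times\mathbb{R}/\!\sim$ with framing $\varepsilon\in\mathbb{Z}/2$. For a CS matrix $A$, $\Sigma_A^\varepsilon$ is a homotopy 4-sphere. Known facts usable: Gompf equivalent CS matrices give diffeomorphic CS spheres, and $\Sigma^\varepsilon_{X_{1,1,2}}$ is diffeomorphic to $S^4$ for $\varepsilon=0,1$. *)

(* Defs.v *)
From HB Require Import structures.
From mathcomp Require Import all_boot all_order all_algebra.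
Set Implicit Arguments. Unset Strict Implicit. Unset Printing Implicit Defensive.
Import Order.TTheory GRing.Theory Num.Theory.
Local Open Scope ring_scope.

Definition fcs (n x : int) : int := x ^+ 3 - n * x ^+ 2 + (n - 1) * x - 1.

Definition inCS (c d n : int) : Prop := d != 0 /\ (d %| fcs n c)%Z.

Definition Xcs (c d n : int) : 'M[int]_3 :=
  let a := (- fcs n c %/ d)%Z in
  let b := (c - 1) * (n - c - 1) in
  \matrix_(i < 3, j < 3)
    match nat_of_ord i, nat_of_ord j with
    | 0%N, 0%N => 0 | 0%N, 1%N => a | 0%N, _ => b
    | 1%N, 0%N => 0 | 1%N, 1%N => c | 1%N, _ => d
    | _, 0%N => 1 | _, 1%N => 0 | _, _ => n - c
    end.

(* Similarity: conjugacy by an element of SL(3,Z):  B = P^{-1} A P, P in SL(3,Z),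
   written without inverse as  A P = P B  with det P = 1. *)
Definition similarSL3 (A B : 'M[int]_3) : Prop :=
  exists P : 'M[int]_3, \det P = 1 /\ A *m P = P *m B.

Inductive gompf : int * int * int -> int * int * int -> Prop :=
| gompf_refl c d n : inCS c d n -> gompf (c, d, n) (c, d, n)
| gompf_sim c d n c' d' n' : inCS c d n -> inCS c' d' n' ->
    similarSL3 (Xcs c d n) (Xcs c' d' n') -> gompf (c, d, n) (c', d', n')
| gompf_shift c d n k : inCS c d n -> inCS c d (n + k * d) ->
    gompf (c, d, n) (c, d, n + k * d)
| gompf_sym t t' : gompf t t' -> gompf t' t
| gompf_trans t t' t'' : gompf t t' -> gompf t' t'' -> gompf t t''.

(* Main.v *)
Require Import Defs.
From HB Require Import structures.
From mathcomp Require Import all_boot all_order all_algebra.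
From mathcomp Require Import ring.
Import Order.TTheory GRing.Theory Num.Theory.
Local Open Scope ring_scope.

Lemma fcs_lin (n x : int) : fcs n x = (x ^+ 3 - x - 1) - n * (x ^+ 2 - x).
Proof. rewrite /fcs; ring. Qed.

Lemma mod_dvd (m a b : int) : (a = b %[mod m])%Z -> exists q, a - b = q * m.
Proof. by move=> /eqP; rewrite eqz_mod_dvd => /dvdzP. Qed.

Theorem theorem5 (c n0 : int) (p : nat) :
  prime p ->
  ((2 * c - 1) * n0 = 3 * c ^+ 2 - 1 %[mod p%:Z])%Z ->
  ((c ^+ 2 - c) * n0 = c ^+ 3 - c - 1 %[mod (p%:Z) ^+ 2])%Z ->
  (forall k : int, inCS c p%:Z ((p%:Z) ^+ 2 * k + n0)) /\
  (forall k n : int,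
     ~ similarSL3 (Xcs c p%:Z ((p%:Z) ^+ 2 * k + n0)) (Xcs 1 1 (n + 2))) /\
  (forall n' : int,
     (n0 = n' %[mod p%:Z])%Z ->
     (forall c' d' : int, inCS c' d' n' -> gompf (c', d', n') (1, 1, 2)) ->
     (* abstract model of CS spheres and diffeomorphism, subject to the known facts *)
     forall (Mfd : Type) (diffeo : Mfd -> Mfd -> Prop)
            (Sigma : 'M[int]_3 -> bool -> Mfd) (S4 : Mfd),
       (forall x y, diffeo x y -> diffeo y x) ->
       (forall x y z, diffeo x y -> diffeo y z -> diffeo x z) ->
       (forall c1 d1 n1 c2 d2 n2 (e : bool), gompf (c1, d1, n1) (c2, d2, n2) ->
          diffeo (Sigma (Xcs c1 d1 n1) e) (Sigma (Xcs c2 d2 n2) e)) ->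
       (forall e : bool, diffeo (Sigma (Xcs 1 1 2) e) S4) ->
       forall (k : int) (e : bool),
         diffeo (Sigma (Xcs c p%:Z ((p%:Z) ^+ 2 * k + n0)) e) S4).
Proof.
move=> pr /mod_dvd [s Hs] /mod_dvd [q2 Hq2].
have pg := prime_gt1 pr.
have p0 : p%:Z != 0 by rewrite eqz_nat; case: (p) pg.
have p1 : p%:Z != 1 by rewrite eqz_nat; case: (p) pg => [|[]].
set P := p%:Z.
have Ff : forall k, fcs (P ^+ 2 * k + n0) c = (- q2 - k * (c ^+ 2 - c)) * P * P.
  move=> k; rewrite fcs_lin.
  have -> : c ^+ 3 - c - 1 = (c ^+ 2 - c) * n0 - q2 * P ^+ 2 by rewrite -Hq2; ring.
  ring.
have CS : forall k, inCS c P (P ^+ 2 * k + n0).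
  move=> k; split => //; apply/dvdzP; exists ((- q2 - k * (c ^+ 2 - c)) * P).
  by rewrite Ff.
split; first exact: CS.
split.
  move=> k n [Q [dQ HQ]].
  set N := P ^+ 2 * k + n0.
  pose U := Xcs c P N - c%:M.
  pose V := Xcs 1 1 (n + 2) - c%:M.
  have HUV : U *m Q = Q *m V.
    by rewrite /U /V mulmxBl mulmxBr HQ mul_scalar_mx mul_mx_scalar.
  have HV : V = \adj Q *m U *m Q.
    by rewrite -mulmxA HUV mulmxA mul_adj_mx dQ mul1mx.
  pose u : 'M[int]_(3,1) := \matrix_(i < 3, j < 1)
     match nat_of_ord i with 0%N => - c | 1%N => 0 | _ => 1 end.
  pose w : 'M[int]_(1,3) := \matrix_(i < 1, j < 3)
     match nat_of_ord j with 0%N => 1 | 1%N => 0 | _ => N - 2 * c end.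
  pose E0 : 'M[int]_3 := \matrix_(i < 3, j < 3)
     match nat_of_ord i, nat_of_ord j with
     | 0%N, 1%N => q2 + k * (c ^+ 2 - c)
     | 0%N, 2%N => (2 * c - 1) * P * k + s
     | 1%N, 2%N => 1
     | _, _ => 0 end.
  have HU : U = u *m w + P *: E0.
  {    have Hs2 : P * s = (2*c-1)*n0 - (3*c^+2-1) by rewrite mulrC Hs.
    apply/matrixP => i j; rewrite !mxE !big_ord1 !mxE.
    case: i => [[|[|[|i]]] Hi] //; case: j => [[|[|[|j]]] Hj] //=; rewrite ?mxE /=.
    all: rewrite ?mulr1n ?mulr0n.
    2: by rewrite /N Ff /P -mulNr (mulzK _ p0); ring.
    2: by rewrite [P * (_ + s)]mulrDr Hs2 /N; ring.
    all: rewrite /N; ring. }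
  have HV2 : V = (\adj Q *m u) *m (w *m Q) + P *: (\adj Q *m E0 *m Q).
    rewrite HV HU mulmxDr mulmxDl; congr (_ + _); first by rewrite !mulmxA.
    by rewrite -scalemxAr -scalemxAl.
  move: HV2; set x := \adj Q *m u; set y := w *m Q; set Ee := \adj Q *m E0 *m Q.
  clearbody x y Ee => HV2.
  have Ve : forall i j, V i j = x i ord0 * y ord0 j + P * Ee i j.
    by move=> i j; rewrite HV2 !mxE big_ord1.
  pose o1 := @Ordinal 3 1 isT. pose o2 := @Ordinal 3 2 isT.
  have key : V o1 ord0 * V o2 o2 - V o1 o2 * V o2 ord0 = -1.
    by rewrite /V !mxE /=; ring.
  rewrite !Ve in key.
  have : (P %| 1)%Z.
    apply/dvdzP.
    exists (- (x o1 ord0 * y ord0 ord0 * Ee o2 o2 + Ee o1 ord0 * x o2 ord0 * y ord0 o2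
       + P * Ee o1 ord0 * Ee o2 o2 - x o1 ord0 * y ord0 o2 * Ee o2 ord0
       - Ee o1 o2 * x o2 ord0 * y ord0 ord0 - P * Ee o1 o2 * Ee o2 ord0)).
    transitivity (- (-1 : int)); first by [].
    rewrite -key; ring.
  by rewrite dvdz1 /P absz_nat => /eqP p1'; move: pg; rewrite p1'.
move=> n' /mod_dvd [j Hj] Hg Mfd diffeo Sigma S4 Hsym Htr Hgd HS k e.
apply: (Htr _ _ _ _ (HS e)); apply: Hgd.
have CSn' : inCS c P n'.
  split => //; apply/dvdzP.
  exists ((- q2 - k * (c ^+ 2 - c)) * P + (P * k + j) * (c ^+ 2 - c)).
  have -> : n' = P ^+ 2 * k + n0 - (P * k + j) * P by rewrite -(subrK n' n0) Hj; ring.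
  rewrite fcs_lin.
  have -> : c ^+ 3 - c - 1 = (c ^+ 2 - c) * n0 - q2 * P ^+ 2 by rewrite -Hq2; ring.
  ring.
have Hsh := gompf_shift (k := P * k + j) CSn'.
have E : n' + (P * k + j) * P = P ^+ 2 * k + n0 by rewrite -(subrK n' n0) Hj; ring.
rewrite E in Hsh.
exact: gompf_trans (gompf_sym (Hsh (CS k))) (Hg _ _ CSn').
Qed.
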